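(* Let $g,n,d$ be nonnegative integers with $2g-2+n>0$, and let $b_2,\dots,b_n$ be nonnegative integers. Expand the coefficient $\big[\mathcal{D}^d_{g,n}(a_2,\dots,a_n)\big]_{a_2^{b_2}\cdots a_n^{b_n}}\in\mathcal{S}^d_{g,n}$ in the standard basis of the strata algebra, and let $[\Gamma,\gamma]$ be a basis element appearing with nonzero coefficient. Then for every $i\in\{2,\dots,n\}$, the exponent $y(\ell_i)$ of the $\psi$-class on the leg $\ell_i$ of $\Gamma$ labeled $i$ in $\gamma$ satisfies $y(\ell_i)\le b_i/2$.
   Context: Stable graphs and strata algebra: a stable graph $\Gamma$ of genus $g$ with $n$ legs has vertices $V$ with genera $g(v)$, half-edges $H$ with vertex map $p$ and involution $\iota$ (2-cycles are edges $E$, fixed points are legs labeled by $\{1,\dots,n\}$), is connected, satisfies $2g(v)-2+n(v)>0$ and $g=\#E-\#V+1+\sum_v g(v)$. The strata algebra $\mathcal{S}_{g,n}$ is the $\mathbb{Q}$-vector space with basis the isomorphism classes of pairs $[\Gamma,\gamma]$ where $\gamma$ is a product over vertices of monomials in $\kappa$-classes and $\psi$-classes of the half-edges at $v$ (of degree $\le 3g(v)-3+n(v)$ on $\overline{\mathcal{M}}_{g(v),n(v)}$); for a half-edge $h$ we write $y(h)$ for the exponent of $\psi_h$ in $\gamma$. It is graded by $\#E+\deg\gamma$; $\mathcal{S}^d_{g,n}$ is the degree-$d$ part. Pixton's class: fix integers $a_1,\dots,a_n$ with $\sum a_j=0$ and an integer $r>0$. A weighting mod $r$ on $\Gamma$ is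 $w:H\to\{0,\dots,r-1\}$ with $w(\ell_i)\equiv a_i$ on legs, $w(h)+w(h')\equiv0$ on each edge $(h,h')$, and $\sum_{h\in p^{-1}(v)}w(h)\equiv0$ at each vertex (all mod $r$). Set $\widetilde{\mathcal{D}}^r_{g,n}=\sum_\Gamma\frac{1}{\#\mathrm{Aut}(\Gamma)}\frac{1}{r^{\#E-\#V+1}}\sum_w[\Gamma,\gamma_w]$ with $\gamma_w=\prod_{i=1}^n e^{\frac12 a_i^2\psi_i}\prod_{(h,h')\in E}\frac{1-e^{-\frac12 w(h)w(h')(\psi_h+\psi_{h'})}}{\psi_h+\psi_{h'}}$ (no $\kappa$-classes). For $r\gg0$ this is polynomial in $r$; its constant term is Pixton's class. Substituting $a_1=-(a_2+\cdots+a_n)$, it is known (Pixton) to depend polynomially on $a_2,\dots,a_n$; it is denoted $\mathcal{D}_{g,n}(a_2,\dots,a_n)$, and $\mathcal{D}^d_{g,n}$ is its degree-$d$ component. $[\,\cdot\,]_{m}$ denotes the coefficient of the monomial $m$. *)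

(* Defs.v *)
From mathcomp Require Import all_boot all_order all_algebra.
From mathcomp Require Import fingroup perm.
From mathcomp Require Import mpoly.
Set Implicit Arguments. Unset Strict Implicit. Unset Printing Implicit Defensive.
Import Order.TTheory GRing.Theory Num.Theory.
Local Open Scope ring_scope.

(* Concrete stable graphs of genus g with n legs.                      *)
(* Vertices : 'I_V, half-edges : 'I_H.                                  *)
(* Data: genus of vertices (bounded by g, which holds for every stable *)
(* graph of genus g), vertex map p, involution iota, leg labelling:    *)
(* leg i (i : 'I_n) is the half-edge carrying label i+1.               *)
Definition CG (g n V H : nat) : finType :=
  ({ffun 'I_V -> 'I_g.+1} * {ffun 'I_H -> 'I_V} * {ffun 'I_H -> 'I_H}
     * {ffun 'I_n -> 'I_H})%type.

Section Graphs.
Variables (g n V H : nat).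
Implicit Type G : CG g n V H.

Definition gv G (v : 'I_V) : nat := G.1.1.1 v.
Definition pv G (h : 'I_H) : 'I_V := G.1.1.2 h.
Definition io G (h : 'I_H) : 'I_H := G.1.2 h.
Definition leg G (i : 'I_n) : 'I_H := G.2 i.

Definition nv G (v : 'I_V) : nat := #|[set h | pv G h == v]|.
Definition nedges G : nat := #|[set h | io G h != h]| %/ 2.
Definition adj G : rel 'I_V :=
  fun v w => [exists h, (pv G h == v) && (pv G (io G h) == w)].

Definition is_stable_graph G : bool :=
  [&& [forall h, io G (io G h) == h],
      injectiveb (leg G),
      [forall h, (io G h == h) == (h \in codom (leg G))],
      (0 < V)%N,
      [forall v, [forall w, connect (adj G) v w]],
      [forall v, (2 < 2 * gv G v + nv G v)%N] &
      (g + V == nedges G + 1 + \sum_(v < V) gv G v)%N ].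

Definition h1 G : int := (nedges G)%:Z + 1 - V%:Z.

Definition is_weighting (r : nat) (a : 'I_n -> int) G (w : {ffun 'I_H -> 'I_r})
  : bool :=
  [&& [forall i, ((w (leg G i))%:Z == a i %[mod r%:Z])%Z],
      [forall h, (io G h != h) ==> ((w h + w (io G h)) %% r == 0)%N] &
      [forall v, ((\sum_(h | pv G h == v) (w h : nat)) %% r == 0)%N] ].

(* Coefficient of the monomial  prod_h psi_h^(y h)  in the power series
   gamma_w = prod_i exp(a_i^2 psi_{l_i}/2)
           * prod_{edges (h,h')} (1 - exp(-w(h)w(h')(psi_h+psi_h')/2))/(psi_h+psi_h').
   Expanded:  exp(c x) = sum_k c^k x^k / k!,
   (1 - exp(-c x))/x = sum_k (-1)^k c^(k+1) x^k / (k+1)!,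
   and (psi_h + psi_h')^k has coefficient binomial(k,p) at psi_h^p psi_h'^(k-p). *)
Definition leg_coef (a : int) (k : nat) : rat :=
  ((a%:~R) ^+ 2 / 2) ^+ k / (k`!)%:R.
Definition edge_coef (c : rat) (p q : nat) : rat :=
  (-1) ^+ (p + q) * c ^+ (p + q).+1 / ((p + q).+1`!)%:R * ('C(p + q, p))%:R.

Definition gamma_coef (r : nat) (a : 'I_n -> int) G (w : {ffun 'I_H -> 'I_r})
  (y : 'I_H -> nat) : rat :=
  (\prod_(i < n) leg_coef (a i) (y (leg G i))) *
  \prod_(h | (io G h != h) && (h < io G h)%N)
     edge_coef ((w h)%:R * (w (io G h))%:R / 2) (y h) (y (io G h)).

End Graphs.

Definition permpair (V H : nat) : finType := prod {perm 'I_V} {perm 'I_H}.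

Definition is_iso_map g n V H V' H' (G' : CG g n V' H') (G : CG g n V H)
  (fV : 'I_V -> 'I_V') (fH : 'I_H -> 'I_H') : bool :=
  [&& [forall v, gv G' (fV v) == gv G v],
      [forall h, pv G' (fH h) == fV (pv G h)],
      [forall h, io G' (fH h) == fH (io G h)] &
      [forall i, leg G' i == fH (leg G i)] ].

Section Graphs2.
Variables (g n V H : nat).
Implicit Type G : CG g n V H.

Definition n_aut G : nat :=
  #|[set s : permpair V H | is_iso_map G G s.1 s.2]|.

Definition iso_same G G' : bool :=
  [exists s : permpair V H, is_iso_map G' G s.1 s.2].

(* number of concrete stable graphs on 'I_V, 'I_H isomorphic to G;
   dividing by it makes a sum over all concrete graphs a sum over
   isomorphism classes (each class counted once). *)
Definition n_class G : nat :=
  #|[set G' : CG g n V H | is_stable_graph G' && iso_same G G']|.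

End Graphs2.

(* Decorated graphs (G,y) (y = psi-exponents on half-edges) and (G0,y0)
   represent the same basis element [Gamma,gamma] of the strata algebra iff
   they are isomorphic (bijections = injections between sets of equal size). *)
Definition deco_iso g n V H V0 H0 (G : CG g n V H) (y : 'I_H -> nat)
  (G0 : CG g n V0 H0) (y0 : 'I_H0 -> nat) : bool :=
  [&& V == V0, H == H0 &
   [exists fV : {ffun 'I_V -> 'I_V0}, exists fH : {ffun 'I_H -> 'I_H0},
      [&& injectiveb fV, injectiveb fH, is_iso_map G0 G fV fH &
          [forall h, y0 (fH h) == y h]]]].

(* A psi-monomial decoration is a basis element of S_{g,n}:
   its degree at each vertex is at most 3g(v)-3+n(v). *)
Definition valid_deco g n V H (G : CG g n V H) (y : 'I_H -> nat) : bool :=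
  [forall v, (\sum_(h | pv G h == v) y h + 3 <= 3 * gv G v + nv G v)%N].

(* Bound on #V and #H for stable graphs of genus g with n legs
   (#V <= 2g-2+n, #H = 2#E + n <= 6g-6+3n). *)
Definition gbound (g n : nat) : nat := (6 * g + 3 * n).+1.

(* Coefficient of the basis element [G0,y0] in D~^r_{g,n} (for legs weights a):
   sum over isomorphism classes of stable graphs Gamma of
   1/|Aut Gamma| * r^(-h^1(Gamma)) * sum_w [Gamma, gamma_w]. *)
Definition Dtilde_coef g n V0 H0 (G0 : CG g n V0 H0) (y0 : 'I_H0 -> nat)
  (r : nat) (a : 'I_n -> int) : rat :=
  \sum_(V < gbound g n) \sum_(H < gbound g n)
   \sum_(G : CG g n V H | is_stable_graph G)
     ((n_class G)%:R * (n_aut G)%:R)^-1 * (r%:R) ^ (- h1 G) *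
     \sum_(w : {ffun 'I_H -> 'I_r} | is_weighting a G w)
       \sum_(y : {ffun 'I_H -> 'I_(\sum_h y0 h).+1}
               | deco_iso G (fun h => (y h : nat)) G0 y0)
         gamma_coef a G w (fun h => (y h : nat)).

Definition rconst (F : nat -> rat) (c : rat) : Prop :=
  exists (P : {poly rat}) (R : nat),
    (forall r, (R <= r)%N -> F r = P.[r%:R]) /\ c = P`_0.

(* a_1 = -(a_2 + ... + a_n): full leg-weight vector from (a_2,...,a_n). *)
Definition extend_a n (a' : 'I_n.-1 -> int) (i : 'I_n) : int :=
  if (i : nat) is k.+1 then
    (if insub k is Some j then a' j else 0)
  else - \sum_(j < n.-1) a' j.

Lemma shift1_proof n (j : 'I_n.-1) : (j.+1 < n)%N.
Proof. by case: n j => [|n] [j Hj]. Qed.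

(* index in 'I_n of the leg labelled j+2, for j : 'I_n.-1 (variable a_{j+2}) *)
Definition shift1 n (j : 'I_n.-1) : 'I_n := Ordinal (shift1_proof j).

(* Main.v *)
Require Import Defs.
From mathcomp Require Import all_boot all_order all_algebra.
From mathcomp Require Import mpoly.
From mathcomp Require Import zify ring lra.
Set Implicit Arguments. Unset Strict Implicit. Unset Printing Implicit Defensive.
Import Order.TTheory GRing.Theory Num.Theory.
Local Open Scope ring_scope.

Lemma digits_lt (Bs n' : nat) (f : 'I_n' -> nat) : (0 < Bs)%N -> (forall i, f i < Bs)%N ->
  (\sum_(i < n') f i * Bs ^ i < Bs ^ n')%N.
Proof.
elim: n' f => [|n IH] f Bp Hf; first by rewrite big_ord0 expn0.
rewrite big_ord_recr /= expnS.
have := IH (fun i => f (widen_ord (leqnSn n) i)) Bp (fun i => Hf _).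
have := Hf ord_max.
set X := (Bs ^ n)%N; set S := \sum_(i < n) _; set F := f _.
nia.
Qed.

Lemma digits_inj (Bs n' : nat) (f g : 'I_n' -> nat) : (0 < Bs)%N -> (forall i, f i < Bs)%N ->
  (forall i, g i < Bs)%N ->
  (\sum_(i < n') f i * Bs ^ i = \sum_(i < n') g i * Bs ^ i)%N -> f =1 g.
Proof.
elim: n' f g => [|n IH] f g Bp Hf Hg; first by move=> _ [].
rewrite !big_ord_recr /= => E.
have Lf := @digits_lt Bs n (fun i => f (widen_ord (leqnSn n) i)) Bp (fun i => Hf _).
have Lg := @digits_lt Bs n (fun i => g (widen_ord (leqnSn n) i)) Bp (fun i => Hg _).
have Em : f ord_max = g ord_max.
  have := congr1 (fun x => x %/ Bs ^ n)%N E.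
  by rewrite !(addnC (\sum_(i < n) _)) !divnMDl ?expn_gt0 ?Bp // !divn_small // !addn0.
have Es : (\sum_(i < n) f (widen_ord (leqnSn n) i) * Bs ^ i = \sum_(i < n) g (widen_ord (leqnSn n) i) * Bs ^ i)%N.
  by move: E; rewrite Em => /addIn.
have IH' := IH _ _ Bp (fun i => Hf _) (fun i => Hg _) Es.
move=> i; case: (unliftP ord_max i) => [i' ->|->] //.
have -> : lift ord_max i' = widen_ord (leqnSn n) i' by apply: val_inj; rewrite /= /bump leqNgt ltn_ord.
exact: IH'.
Qed.

Lemma denom_common (s : seq rat) : exists K : int, K != 0 /\
  forall x, x \in s -> exists z : int, K%:~R * x = z%:~R.
Proof.
elim: s => [|x s [K [K0 HK]]]; first by exists 1.
exists (K * denq x); split; first by rewrite mulf_neq0 ?denq_neq0.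
move=> y; rewrite inE => /orP [/eqP -> | ys].
  exists (K * numq x); rewrite !intrM -mulrA; congr (_ * _).
  by rewrite numqE mulrC.
case: (HK y ys) => z Hz; exists (z * denq x).
by rewrite !intrM mulrAC Hz.
Qed.

Lemma kron (n' : nat) (Q : {mpoly rat[n']}) (j : 'I_n') (L : nat) (Kt : int) :
  Kt != 0 ->
  (forall a' : 'I_n' -> int, exists z : int,
      Kt%:~R * Q.@[fun i => (a' i)%:~R] = ((a' j) ^+ L)%:~R * z%:~R) ->
  forall b, Q@_b != 0 -> (L <= b j)%N.
Proof.
move=> Kt0 HQ b Hb; rewrite leqNgt; apply/negP => bjL.
set Bs := (\sum_(m <- msupp Q) \sum_(i < n') m i).+1.
have Bsp : (0 < Bs)%N by [].
have Bnd : forall m, m \in msupp Q -> forall i, (m i < Bs)%N.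
  move=> m mQ i; rewrite ltnS (big_rem _ mQ) /=; apply: leq_trans (leq_addr _ _).
  by rewrite (bigD1 i) //= leq_addr.
pose d (m : 'X_{1..n'}) := (\sum_(i < n') m i * Bs ^ i)%N.
pose e m := (d m + m j * Bs ^ n')%N.
have dlt : forall m, m \in msupp Q -> (d m < Bs ^ n')%N.
  by move=> m mQ; apply: digits_lt => //; exact: Bnd.
have einj : {in msupp Q &, injective e}.
  move=> m1 m2 m1Q m2Q E.
  have Ed : d m1 = d m2.
    have := congr1 (fun x => x %% Bs ^ n')%N E.
    by rewrite /e !(addnC (d _)) !modnMDl !modn_small // dlt.
  by apply/mnmP => i; exact: (digits_inj Bsp (Bnd _ m1Q) (Bnd _ m2Q) Ed i).
pose low := [seq m <- msupp Q | ((m : 'X_{1..n'}) j < L)%N].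
have bl : b \in low by rewrite mem_filter bjL mcoeff_msupp Hb.
have exP : exists x, (fun x => has (fun m => e m == x) low) x.
  by exists (e b); apply/hasP; exists b.
case: (ex_minnP exP) => e0 /hasP [m0 m0l /eqP em0] minP.
have m0Q : m0 \in msupp Q by move: m0l; rewrite mem_filter => /andP[].
have m0j : (m0 j < L)%N by move: m0l; rewrite mem_filter => /andP[].
have e0lt : (e0 < L * Bs ^ n')%N.
  rewrite -em0 /e; apply: (@leq_trans (Bs ^ n' + m0 j * Bs ^ n')%N).
    by rewrite ltn_add2r dlt.
  by rewrite -mulSn leq_mul2r m0j orbT.
have emin : forall m, m \in msupp Q -> m != m0 -> (e0 < e m)%N.
  move=> m mQ mm0; case: (ltnP (m j) L) => mjL.
    have ml : m \in low by rewrite mem_filter mjL.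
    have : has (fun m' : 'X_{1..n'} => e m' == e m) low by apply/hasP; exists m.
    move=> /minP.
    rewrite leq_eqVlt => /orP [/eqP E|//].
    by move: mm0; rewrite (einj _ _ mQ m0Q) ?eqxx // -E em0.
  apply: (leq_trans e0lt); rewrite /e; apply: leq_trans (leq_addl _ _).
  by rewrite leq_mul2r mjL orbT.
case: (denom_common [seq Q@_m | m <- msupp Q]) => K2 [K20 HK2].
pose qz m := numq (K2%:~R * Q@_m).
have Hqz : forall m, K2%:~R * Q@_m = (qz m)%:~R.
  move=> m; case: (boolP (m \in msupp Q)) => mQ.
    case: (HK2 (Q@_m)); first by apply/mapP; exists m.
    by move=> z Hz; rewrite /qz Hz numq_int.
  by move: mQ; rewrite /qz mcoeff_msupp negbK => /eqP ->; rewrite mulr0.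
have q0 : qz m0 != 0.
  by rewrite -(intr_eq0 rat) -Hqz mulf_neq0 ?intr_eq0 // -mcoeff_msupp.
set x := Kt * qz m0.
have x0 : x != 0 by rewrite mulf_neq0.
set N := (`|x|%N).+1.
pose c (i : 'I_n') := (Bs ^ i + (i == j) * Bs ^ n')%N.
pose a' := fun i : 'I_n' => ((N ^ c i)%N)%:Z.
case: (HQ a') => z Hz.
have Hev : Q.@[fun i => (a' i)%:~R] = \sum_(m <- msupp Q) Q@_m * (N%:R) ^+ (e m).
  rewrite mevalE; apply: eq_bigr => m _; congr (_ * _).
  have nz : forall k : nat, ((k%:Z)%:~R : rat) = k%:R by [].
  under eq_bigr do rewrite /a' nz natrX -exprM.
  rewrite prodrXr; congr (_ ^+ _).
  rewrite /e /d /c; under eq_bigr do rewrite mulnDl.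
  rewrite big_split /=; congr (_ + _); first by apply: eq_bigr => i _; rewrite mulnC.
  rewrite (bigD1 j) //= eqxx mul1n big1 ?addn0; first by rewrite mulnC.
  by move=> i /negbTE ->; rewrite mul0n.
have pX : forall a k : nat, ((a ^ k)%N)%:Z = (a%:Z) ^+ k.
  by move=> a k; elim: k => // k IH; rewrite expnS exprS PoszM IH.
pose S := \sum_(m <- msupp Q) qz m * (N%:Z) ^+ e m.
have HS : Kt * S = a' j ^+ L * (K2 * z).
  apply: (@intr_inj rat); rewrite !intrM rmorph_sum /=.
  under eq_bigr do rewrite intrM -Hqz rmorphXn /= -mulrA.
  by rewrite -mulr_sumr -Hev mulrCA Hz mulrCA.
have D1 : (N%:Z ^+ e0.+1 %| Kt * S)%Z.
  rewrite HS; apply: dvdz_mulr; rewrite /a' pX -exprM; apply: dvdz_exp2l.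
  rewrite /c eqxx mul1n; apply: leq_trans e0lt _.
  by rewrite [X in (_ <= X)%N]mulnC leq_mul2l leq_addl orbT.
have D2 : (N%:Z ^+ e0.+1 %| Kt * (S - qz m0 * N%:Z ^+ e0))%Z.
  apply: dvdz_mull; rewrite /S (bigD1_seq m0) //= ?msupp_uniq // em0 addrAC subrr add0r.
  rewrite big_seq_cond; apply: rpred_sum => m /andP [mQ mm0].
  by apply: dvdz_mull; apply: dvdz_exp2l; exact: emin.
have D3 : (N%:Z * N%:Z ^+ e0 %| x * N%:Z ^+ e0)%Z.
  have -> : x * N%:Z ^+ e0 = Kt * S - Kt * (S - qz m0 * N%:Z ^+ e0) by rewrite /x; ring.
  by rewrite -exprS; apply: rpredB.
move: D3; rewrite dvdz_mul2r ?expf_neq0 // dvdzE absz_nat => /dvdn_leq.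
by rewrite absz_gt0 x0 /N ltnn => /(_ isT).
Qed.

Definition AZ (A : int) (x : rat) := exists z : int, x = A%:~R * z%:~R.

Lemma AZ0 A : AZ A 0. Proof. by exists 0; rewrite mulr0. Qed.
Lemma AZD A x y : AZ A x -> AZ A y -> AZ A (x + y).
Proof. by move=> [z1 ->] [z2 ->]; exists (z1 + z2); rewrite rmorphD mulrDr. Qed.
Lemma AZ_sum A (I : Type) (r : seq I) (P : pred I) (F : I -> rat) :
  (forall i, P i -> AZ A (F i)) -> AZ A (\sum_(i <- r | P i) F i).
Proof. move=> H; apply: big_ind => //; [exact: AZ0 | exact: AZD]. Qed.
Lemma AZMz A x (w : int) : AZ A x -> AZ A (x * w%:~R).
Proof. by move=> [z ->]; exists (z * w); rewrite rmorphM mulrA. Qed.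
Lemma AZzM A x (w : int) : AZ A x -> AZ A (w%:~R * x).
Proof. by move=> H; rewrite mulrC; apply: AZMz. Qed.

Definition Dv (N : nat) : int :=
  \prod_(i < N.+1) \prod_(j < N.+1 | (i < j)%N) (j%:Z - i%:Z).

Lemma Dv_neq0 N : Dv N != 0.
Proof.
rewrite /Dv; apply/prodf_neq0 => i _; apply/prodf_neq0 => j ij.
by rewrite subr_eq0 eqz_nat neq_ltn ij orbT.
Qed.

Lemma vander_int (N R : nat) (T : {poly rat}) (A : int) :
  (size T <= N.+1)%N ->
  (forall l, (l <= N)%N -> AZ A T.[(R + l)%:R]) ->
  forall i, AZ A ((Dv N)%:~R * T`_i).
Proof.
move=> sT HT i.
have [iN|iN] := ltnP i N.+1; last first.
  by rewrite nth_default ?mulr0; [exact: AZ0 | exact: leq_trans iN].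
pose az : 'rV[int]_(N.+1) := \row_l (R + l)%:Z.
pose Vz := Vandermonde N.+1 az.
pose V := map_mx (intr : int -> rat) Vz.
pose cT : 'rV[rat]_(N.+1) := \row_i T`_i.
have E : forall l, (cT *m V) 0 l = T.[(R + l)%:R].
  move=> l; rewrite mxE (horner_coef_wide _ sT); apply: eq_bigr => k _.
  by rewrite !mxE rmorphXn.
have dV : \det V = (Dv N)%:~R.
  rewrite det_map_mx det_Vandermonde /Dv.
  congr intr; apply: eq_bigr => k _; apply: eq_bigr => l _.
  by rewrite !mxE !PoszD; ring.
have M : cT *m V *m \adj V = \det V *: cT by rewrite -mulmxA mul_mx_adj mul_mx_scalar.
have := congr1 (fun X : 'M[rat]_(1, N.+1) => X 0 (Ordinal iN)) M; rewrite /= [in RHS]mxE [in RHS]mxE dV => <-.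
rewrite mxE; apply: AZ_sum => l _.
rewrite E /V -map_mx_adj mxE; apply: AZMz; apply: HT; rewrite -ltnS; exact: ltn_ord.
Qed.

Definition isZ (x : rat) := exists z : int, x = z%:~R.

Lemma isZ_AZ A x y : isZ x -> AZ A y -> AZ A (x * y).
Proof. by move=> [u ->] Ay; apply: AZzM. Qed.
Lemma isZM x y : isZ x -> isZ y -> isZ (x * y).
Proof. by move=> [u ->] [v ->]; exists (u * v); rewrite rmorphM. Qed.
Lemma isZ_prod (I : Type) (r : seq I) (P : pred I) (F : I -> rat) :
  (forall i, P i -> isZ (F i)) -> isZ (\prod_(i <- r | P i) F i).
Proof. by move=> H; apply: big_ind => //; [exists 1 | exact: isZM]. Qed.
Lemma isZ_nat (k : nat) : isZ k%:R. Proof. by exists k. Qed.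

Lemma edge_int (S p q w1 w2 : nat) : (p + q <= 2 * S)%N ->
  isZ ((2 ^ (2 * S + 1) * (2 * S + 1)`!)%:R * edge_coef (w1%:R * w2%:R / 2) p q).
Proof.
move=> hs; rewrite /edge_coef; set s := (p + q)%N.
have EP := fact_split (_ : (s.+1 <= 2 * S + 1)%N); rewrite EP; last by rewrite /s; lia.
set Pq := \prod_(_ <= _ < _) _.
have E2 : (2 ^ (2 * S + 1) = 2 ^ (2 * S - s) * 2 ^ s.+1)%N by rewrite -expnD; congr (expn _ _); rewrite /s; lia.
rewrite E2.
exists ((-1) ^+ s * (w1 * w2)%:Z ^+ s.+1 * 'C(s, p)%:Z * (2 ^ (2 * S - s))%:Z * Pq%:Z).
have := fact_gt0 s.+1; move: (s.+1)`! => F F0.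
have f0 : F%:R != 0 :> rat by rewrite pnatr_eq0 -lt0n.
rewrite !rmorphM /= !rmorphXn /= ?natrM ?natrX.
have nz : forall k : nat, ((k%:Z)%:~R : rat) = k%:R by [].
rewrite !nz.
set C := ('C(s, p))%:R; set X1 := (w1%:R : rat); set X2 := (w2%:R : rat).
set FF := (F%:R : rat); set PP := (Pq%:R : rat).
rewrite (_ : (-1)%:~R = -1 :> rat) // natrM natrX -/X1 -/X2 expr_div_n.
set sg := (-1) ^+ s; set U := (X1 * X2) ^+ s.+1; set T := (2 : rat) ^+ (2 * S - s).
have t0 : (2 : rat) ^+ s.+1 != 0 by rewrite expf_neq0.
move: t0; set TT := (2 : rat) ^+ s.+1 => t0.
by field; rewrite f0 t0.
Qed.

Lemma size_bound (P : {poly rat}) (f : nat -> rat) (R M : nat) (C : rat) :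
  (forall r, (R <= r)%N -> P.[r%:R] = f r) ->
  (forall r, (R <= r)%N -> (0 < r)%N -> `|f r| <= C * r%:R ^+ M) ->
  (size P <= M.+1)%N.
Proof.
move=> HP Hf; rewrite leqNgt; apply/negP => sP.
have [d sd] : exists d, size P = d.+1 by exists (size P).-1; rewrite prednK //; lia.
have dM : (M <= d.-1)%N by lia.
set lc := P`_d.
have lc0 : lc != 0.
  have -> : lc = lead_coef P by rewrite lead_coefE sd.
  by rewrite lead_coef_eq0 -size_poly_eq0 sd.
set S := \sum_(i < d) `|P`_i|.
set q := (S + `|C|) / `|lc|.
have q0 : 0 <= q by rewrite /q divr_ge0 // addr_ge0 // sumr_ge0.
set r := (R + Num.Def.archi_bound q).+1.
have rR : (R <= r)%N by rewrite /r; lia.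
have r0 : (0 < r)%N by [].
have X1 : 1 <= (r%:R : rat) by rewrite ler1n.
have Xq : q < r%:R.
  apply: lt_le_trans (archi_boundP q0) _; rewrite ler_nat /r; lia.
have := Hf r rR r0; rewrite -HP // horner_coef sd big_ord_recr /=.
set X := (r%:R : rat).
set Sm := \sum_(i < d) _.
have HSm : `|Sm| <= S * X ^+ d.-1.
  apply: le_trans (ler_norm_sum _ _ _) _; rewrite /S mulr_suml; apply: ler_sum => i _.
  rewrite normrM normrX (ger0_norm (le_trans ler01 X1)) ler_wpM2l //.
  apply: ler_weXn2l => //; have := ltn_ord i; lia.
have HXM : X ^+ M <= X ^+ d.-1 by apply: ler_weXn2l.
have Xd : X ^+ d = X * X ^+ d.-1 by rewrite -exprS prednK //; lia.
have Y0 : 0 < X ^+ d.-1 by apply: exprn_gt0; apply: lt_le_trans X1.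
have CX : C * X ^+ M <= `|C| * X ^+ d.-1.
  apply: le_trans (_ : `|C| * X ^+ M <= _); first by rewrite ler_wpM2r ?ler_norm ?exprn_ge0 // (le_trans ler01 X1).
  by rewrite ler_wpM2l.
have Hlow := lerB_normD (lc * X ^+ d) Sm.
have lX : `|lc| * X > S + `|C|.
  by move: Xq; rewrite /q ltr_pdivrMr ?normr_gt0 // mulrC.
rewrite addrC => H.
have : `|lc * X ^+ d| = `|lc| * X * X ^+ d.-1 by rewrite normrM normrX (ger0_norm (le_trans ler01 X1)) Xd mulrA.
move=> HlcX.
have K1 : (S + `|C|) * X ^+ d.-1 < `|lc| * X * X ^+ d.-1 by rewrite ltr_pM2r.
have HSm' : `|Sm| <= S * X ^+ d.-1 := HSm.
rewrite -/lc in H; rewrite HlcX in Hlow.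
move: K1 HSm' Hlow H CX; rewrite mulrDl.
set a := `|lc| * X * X ^+ d.-1; set b := S * X ^+ d.-1; set c := `|C| * X ^+ d.-1.
set u := `|Sm|; set v := `|_ + Sm|; set w := C * X ^+ M.
move=> h1 h2 h3 h4 h5; clearbody a b c u v w; clear -h1 h2 h3 h4 h5; lra.
Qed.

Lemma AZ_sumK A (K : rat) (I : Type) (r : seq I) (P : pred I) (F : I -> rat) :
  (forall i, P i -> AZ A (K * F i)) -> AZ A (K * \sum_(i <- r | P i) F i).
Proof. by move=> H; rewrite mulr_sumr; apply: AZ_sum. Qed.

Lemma dvdn_prod_fin (I : finType) (F : I -> nat) i : (F i %| \prod_j F j)%N.
Proof. by rewrite (bigD1 i) //= dvdn_mulr. Qed.

Lemma leg_int (a : int) (k : nat) :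
  (2 ^ k * k`!)%:R * leg_coef a k = (a ^+ (2 * k))%:~R.
Proof.
rewrite /leg_coef rmorphXn /= exprM.
have := fact_gt0 k; move: k`! => F F0.
have f0 : F%:R != 0 :> rat by rewrite pnatr_eq0 -lt0n.
rewrite natrM natrX expr_div_n.
set X := (a%:~R : rat) ^+ 2; set T := (2 : rat) ^+ k.
have t0 : T != 0 by rewrite expf_neq0.
set XX := X ^+ k.
by field; rewrite f0 t0.
Qed.

Lemma deco_leg g n V H V0 H0 (G : CG g n V H) (y : 'I_H -> nat) (G0 : CG g n V0 H0)
  (y0 : 'I_H0 -> nat) i : deco_iso G y G0 y0 -> y (leg G i) = y0 (leg G0 i).
Proof.
case/and3P => _ _ /existsP [fV /existsP [fH /and4P [_ _ /and4P [_ _ _ /forallP Hl] /forallP Hy]]].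
by rewrite (eqP (Hl i)) (eqP (Hy _)).
Qed.

Lemma nedges_le g n V H (G : CG g n V H) : (nedges G <= H)%N.
Proof.
rewrite /nedges; apply: leq_trans (leq_div _ _) _.
by apply: leq_trans (max_card _) _; rewrite card_ord.
Qed.

Lemma Dtilde_AZ (g n V0 H0 : nat) (G0 : CG g n V0 H0) (y0 : 'I_H0 -> nat) (i0 : 'I_n) :
  exists F : nat, (0 < F)%N /\ forall (a : 'I_n -> int) (r : nat), (0 < r)%N ->
   AZ ((a i0) ^+ (2 * y0 (leg G0 i0))) (F%:R * r%:R ^+ gbound g n * Dtilde_coef G0 y0 r a).
Proof.
set gb := gbound g n.
set S := (\sum_(h < H0) y0 h)%N.
set EF := (2 ^ (2 * S + 1) * (2 * S + 1)`!)%N.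
set F1 := (\prod_(V < gb) \prod_(H < gb) \prod_(G : CG g n V H) maxn 1 (n_class G * n_aut G))%N.
set FE := (EF ^ gb)%N.
set FL := (\prod_(i < n) (2 ^ y0 (leg G0 i) * (y0 (leg G0 i))`!))%N.
have F1p : (0 < F1)%N.
  rewrite /F1 prodn_gt0 // => V; rewrite prodn_gt0 // => H; rewrite prodn_gt0 // => G.
  by rewrite leq_max.
have EFp : (0 < EF)%N by rewrite /EF muln_gt0 expn_gt0 fact_gt0.
have FLp : (0 < FL)%N by rewrite /FL prodn_gt0 // => i; rewrite muln_gt0 expn_gt0 fact_gt0.
exists (F1 * FE * FL)%N; split; first by rewrite !muln_gt0 F1p FLp expn_gt0 EFp.
move=> a r r0; set A := a i0 ^+ _.
rewrite /Dtilde_coef -/gb.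
apply: AZ_sumK => V _; apply: AZ_sumK => H _; apply: AZ_sumK => G stG.
set c := ((n_class G)%:R * (n_aut G)%:R)^-1.
set rho := r%:R ^ (- h1 G).
set X := \sum_(w | _) _.
have -> : (F1 * FE * FL)%:R * r%:R ^+ gb * (c * rho * X) =
   (F1%:R * c) * ((r%:R ^+ gb * rho) * ((FE * FL)%:R * X)) by rewrite !natrM; ring.
apply: isZ_AZ.
  set m := (n_class G * n_aut G)%N.
  have -> : c = (m%:R)^-1 by rewrite /c natrM.
  have dv : (maxn 1 m %| F1)%N.
    apply: (dvdn_trans _ (dvdn_prod_fin _ V)).
    apply: (dvdn_trans _ (dvdn_prod_fin _ H)).
    exact: (dvdn_prod_fin (fun G : CG g n V H => maxn 1 (n_class G * n_aut G)) G).
  case: (posnP m) => [->|mp]; first by exists 0; rewrite invr0 mulr0.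
  move: dv; rewrite (maxn_idPr mp) => dv.
  exists (F1 %/ m)%N; rewrite -{1}(divnK dv) natrM mulfK //.
  by rewrite pnatr_eq0 -lt0n.
apply: isZ_AZ.
  have hE : (gb%:Z - h1 G) = (gb + V - nedges G - 1)%N%:Z.
    rewrite /h1; have := nedges_le G; have := ltn_ord H; rewrite /gb; lia.
  rewrite /rho (_ : r%:R ^+ gb = r%:R ^ (gb%:Z)) // -expfzDr ?pnatr_eq0 -?lt0n // hE.
  by exists (r ^ (gb + V - nedges G - 1))%N; rewrite (_ : forall k : nat, ((k%:Z)%:~R : rat) = k%:R) // natrX.
rewrite /X; apply: AZ_sumK => w _; apply: AZ_sumK => y dy.
rewrite /gamma_coef.
set Lp := \prod_(i < n) _; set Ep := \prod_(h | _) _.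
have -> : (FE * FL)%:R * (Lp * Ep) = (FE%:R * Ep) * (FL%:R * Lp) by rewrite natrM; ring.
apply: isZ_AZ.
  rewrite /Ep /FE.
  set P := (fun h : 'I_H => (io G h != h) && (h < io G h)%N).
  have cP : (#|P| <= gb)%N.
    by apply: leq_trans (max_card _) _; rewrite card_ord ltnW.
  have E : (EF ^ gb = EF ^ (gb - #|P|) * EF ^ #|P|)%N by rewrite -expnD subnK.
  rewrite E natrM -mulrA; apply: isZM; first exact: isZ_nat.
  rewrite natrX -(@prodr_const rat _ P EF%:R) -big_split /=; apply: isZ_prod => h _.
  apply: edge_int.
  by rewrite mul2n -addnn leq_add // -ltnS ltn_ord.
have -> : Lp = \prod_(i < n) leg_coef (a i) (y0 (leg G0 i)).
  by apply: eq_bigr => i _; rewrite -(deco_leg i dy).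
rewrite /FL natr_prod -big_split /=.
under eq_bigr do rewrite leg_int.
rewrite (bigD1 i0) //=; exists (\prod_(i < n | i != i0) a i ^+ (2 * y0 (leg G0 i))).
by rewrite rmorph_prod.
Qed.

Lemma edge_bound (S p q r : nat) (w1 w2 : 'I_r) : (p + q <= 2 * S)%N ->
  `|edge_coef ((w1 : nat)%:R * (w2 : nat)%:R / 2) p q| <= (2 * S)`!%:R * r%:R ^+ (4 * S + 2).
Proof.
rewrite /edge_coef; set s := (p + q)%N => hs.
set c := _ / 2.
have c0 : 0 <= c by rewrite /c divr_ge0 // mulr_ge0.
have cr : c <= r%:R ^+ 2.
  have h1 : (w1 : nat)%:R <= r%:R :> rat by rewrite ler_nat ltnW.
  have h2 : (w2 : nat)%:R <= r%:R :> rat by rewrite ler_nat ltnW.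
  have hw : (w1 : nat)%:R * (w2 : nat)%:R <= r%:R ^+ 2 :> rat.
    by rewrite expr2 ler_pM.
  have w0 : 0 <= (w1 : nat)%:R * (w2 : nat)%:R :> rat by rewrite mulr_ge0.
  have r20 : 0 <= r%:R ^+ 2 :> rat by rewrite exprn_ge0.
  rewrite /c ler_pdivrMr //; lra.
case: (posnP r) => [r0|rp].
  have -> : c = 0 by apply/eqP; rewrite eq_le c0 andbT; move: cr; rewrite r0 expr2 mulr0.
  by rewrite expr0n /= mulr0 !mul0r normr0 mulr_ge0 // exprn_ge0.
have r1 : 1 <= r%:R :> rat by rewrite ler1n.
rewrite !normrM normrX normrN1 expr1n mul1r normfV !normr_nat (ger0_norm (exprn_ge0 _ c0)).
have E1 : c ^+ s.+1 <= r%:R ^+ (4 * S + 2).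
  apply: le_trans (_ : (r%:R ^+ 2) ^+ s.+1 <= _).
    by apply: lerXn2r => //; rewrite qualifE /= ?exprn_ge0 // (le_trans ler01 r1).
  rewrite -exprM; apply: ler_weXn2l => //; rewrite /s; lia.
have E2 : ((s.+1)`!%:R : rat)^-1 <= 1 by rewrite invf_le1 ?ltr0n ?fact_gt0 // ler1n fact_gt0.
have E3 : ('C(s, p)%:R : rat) <= (2 * S)`!%:R.
  rewrite ler_nat; apply: leq_trans (_ : s`! <= _)%N; last exact: leq_fact.
  rewrite -(bin_fact (_ : p <= s)%N); last by rewrite /s leq_addr.
  by rewrite leq_pmulr // muln_gt0 !fact_gt0.
rewrite mulrC; apply: le_trans (_ : (2 * S)`!%:R * (r%:R ^+ (4 * S + 2) * 1) <= _); last by rewrite mulr1.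
apply: ler_pM => //; first by rewrite mulr_ge0 ?exprn_ge0 // invr_ge0.
apply: ler_pM => //; [exact: exprn_ge0 | by rewrite invr_ge0].
Qed.

Lemma rho_bound g n V H (G : CG g n V H) (r gb : nat) : (0 < r)%N -> (V < gb)%N ->
  `|(r%:R : rat) ^ (- h1 G)| <= r%:R ^+ gb.
Proof.
move=> r0 Vgb.
have r1 : 1 <= r%:R :> rat by rewrite ler1n.
have rg0 : 0 <= r%:R :> rat by apply: le_trans r1.
case E: (- h1 G) => [k|k].
  rewrite /exprz ger0_norm ?exprn_ge0 //; apply: ler_weXn2l => //.
  move: E; rewrite /h1; lia.
rewrite /exprz normfV ger0_norm ?exprn_ge0 //.
apply: le_trans (_ : 1 <= _); last by rewrite exprn_ege1.
by rewrite invf_le1 ?exprn_gt0 ?exprn_ege1 // (lt_le_trans ltr01 r1).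
Qed.

Lemma sum_le_filter (T : finType) (P : pred T) (F : T -> rat) (K : rat) :
  0 <= K -> (forall t, P t -> F t <= K) -> \sum_(t | P t) F t <= K *+ #|T|.
Proof.
move=> K0 H; rewrite -sumr_const big_mkcond /=; apply: ler_sum => t _.
by case: ifP => // /H.
Qed.

Lemma Dtilde_growth (g n V0 H0 : nat) (G0 : CG g n V0 H0) (y0 : 'I_H0 -> nat) :
  exists M : nat, forall a : 'I_n -> int, exists C : rat, forall r, (0 < r)%N ->
    `|Dtilde_coef G0 y0 r a| <= C * r%:R ^+ M.
Proof.
set gb := gbound g n.
set S := (\sum_(h < H0) y0 h)%N.
set EB : rat := (2 * S)`!%:R.
have EB1 : 1 <= EB by rewrite /EB ler1n fact_gt0.
exists (gb + gb + (4 * S + 2) * gb)%N => a.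
pose Lp V H (G : CG g n V H) (y : {ffun 'I_H -> 'I_S.+1}) :=
  \prod_(i < n) leg_coef (a i) (y (leg G i)).
pose CG_ V H (G : CG g n V H) := `|((n_class G)%:R * (n_aut G)%:R)^-1| *
   (\sum_(y : {ffun 'I_H -> 'I_S.+1}) `|Lp V H G y|) * EB ^+ gb.
exists (\sum_(V < gb) \sum_(H < gb) \sum_(G : CG g n V H | is_stable_graph G) CG_ V H G).
move=> r r0.
have r1 : 1 <= r%:R :> rat by rewrite ler1n.
have rg0 : 0 <= r%:R :> rat by apply: le_trans r1.
rewrite /Dtilde_coef -/gb mulr_suml.
apply: le_trans (ler_norm_sum _ _ _) _; apply: ler_sum => V _.
rewrite mulr_suml; apply: le_trans (ler_norm_sum _ _ _) _; apply: ler_sum => H _.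
rewrite mulr_suml; apply: le_trans (ler_norm_sum _ _ _) _; apply: ler_sum => G stG.
set Y : rat := EB * r%:R ^+ (4 * S + 2).
have Y1 : 1 <= Y by rewrite /Y -[1]mulr1 ler_pM // exprn_ege1.
have Y0 : 0 <= Y by apply: le_trans Y1.
have HSS : `|\sum_(w : {ffun 'I_H -> 'I_r} | is_weighting a G w)
            \sum_(y : {ffun 'I_H -> 'I_S.+1} | deco_iso G (fun h : 'I_H => y h : nat) G0 y0)
               gamma_coef a G w (fun h : 'I_H => y h : nat)|
     <= ((\sum_(y : {ffun 'I_H -> 'I_S.+1}) `|Lp V H G y|) * Y ^+ gb) *+ #|{ffun 'I_H -> 'I_r}|.
  apply: le_trans (ler_norm_sum _ _ _) _; apply: sum_le_filter.
    by rewrite mulr_ge0 ?exprn_ge0 // sumr_ge0.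
  move=> w _; apply: le_trans (ler_norm_sum _ _ _) _.
  apply: (@le_trans _ _ (\sum_(y : {ffun 'I_H -> 'I_S.+1}) `|Lp V H G y| * Y ^+ gb)); last first.
    by rewrite mulr_suml.
  rewrite big_mkcond /=; apply: ler_sum => y _; case: ifP => _; last first.
    by rewrite mulr_ge0 ?exprn_ge0.
  rewrite /gamma_coef normrM ler_wpM2l //.
  rewrite normr_prod.
  apply: le_trans (_ : _ <= \prod_(h | (io G h != h) && (h < io G h)%N) Y) _.
    apply: ler_prod => h _; rewrite normr_ge0 /=; apply: edge_bound.
    by rewrite mul2n -addnn leq_add // -ltnS ltn_ord.
  rewrite prodr_const; apply: ler_weXn2l => //.
  by apply: leq_trans (max_card _) _; rewrite card_ord ltnW.
rewrite card_ffun !card_ord in HSS.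
set SL := \sum_(y : {ffun 'I_H -> 'I_S.+1}) `|Lp V H G y|.
have SL0 : 0 <= SL by rewrite sumr_ge0.
have HSS' : `|\sum_(w : {ffun 'I_H -> 'I_r} | is_weighting a G w)
            \sum_(y : {ffun 'I_H -> 'I_S.+1} | deco_iso G (fun h : 'I_H => y h : nat) G0 y0)
               gamma_coef a G w (fun h : 'I_H => y h : nat)|
     <= (SL * EB ^+ gb * r%:R ^+ ((4 * S + 2) * gb)) * r%:R ^+ gb.
  apply: le_trans HSS _; rewrite -mulr_natr natrX /Y exprMn -exprM mulrA.
  apply: ler_wpM2l; first by rewrite !mulr_ge0 ?exprn_ge0 // (le_trans ler01 EB1).
  by apply: ler_weXn2l => //; apply: ltnW.
have Hr := rho_bound G r0 (ltn_ord V).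
rewrite !normrM.
apply: le_trans (_ : _ <= `|((n_class G)%:R * (n_aut G)%:R)^-1| * r%:R ^+ gb *
    ((SL * EB ^+ gb * r%:R ^+ ((4 * S + 2) * gb)) * r%:R ^+ gb)) _.
  by apply: ler_pM => //; [rewrite mulr_ge0 | rewrite ler_wpM2l].
rewrite /CG_ -/SL !exprD le_eqVlt; apply/orP; left; apply/eqP; ring.
Qed.

Lemma extend_shift n (a' : 'I_n.-1 -> int) (j : 'I_n.-1) : extend_a a' (shift1 j) = a' j.
Proof.
rewrite /extend_a /shift1 /=.
case: insubP => [j' _ E|]; first by congr (a' _); apply: val_inj.
by rewrite ltn_ord.
Qed.

Unset Implicit Arguments.

Theorem lemma2p4 (g n d : nat) (Hgn : (2 < 2 * g + n)%N)
  (b : 'X_{1..n.-1})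
  (V0 H0 : nat) (G0 : CG g n V0 H0) (HG0 : is_stable_graph G0)
  (y0 : 'I_H0 -> nat) (Hy0 : valid_deco G0 y0)
  (Hdeg : (nedges G0 + \sum_(h < H0) y0 h)%N = d)
  (Q : {mpoly rat[n.-1]})
  (HQ : forall a' : 'I_n.-1 -> int,
      rconst (fun r => Dtilde_coef G0 y0 r (extend_a a'))
             (Q.@[fun j => (a' j)%:~R]))
  (Hnz : Q@_b != 0) :
  forall j : 'I_n.-1, ((y0 (leg G0 (shift1 j)))%:R <= (b j)%:R / 2 :> rat).
Proof.
move=> j.
set k := y0 (leg G0 (shift1 j)).
suff : (2 * k <= b j)%N.
  by move=> h; rewrite ler_pdivlMr // -natrM ler_nat; lia.
case: (Dtilde_AZ G0 y0 (shift1 j)) => F [F0 HF].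
case: (Dtilde_growth G0 y0) => M HM.
set gb := gbound g n.
set N := (M + gb)%N.
apply: (@kron _ Q j (2 * k) ((Dv N) * F%:Z)) => //.
  by rewrite mulf_neq0 ?Dv_neq0 // eqz_nat -lt0n.
move=> a'.
case: (HQ a') => P [R [HPR HP0]].
case: (HM (extend_a a')) => C HC.
have sP : (size P <= M.+1)%N.
  apply: (@size_bound P (fun r => Dtilde_coef G0 y0 r (extend_a a')) R.+1 M C).
    by move=> r Rr; rewrite HPR //; apply: ltnW.
  by move=> r _ r0; apply: HC.
pose T := (F%:R *: P) * 'X^gb.
have sT : (size T <= N.+1)%N.
  apply: leq_trans (size_mul_leq _ _) _; rewrite size_polyXn /=.
  rewrite addnS /= /N -addSn leq_add2r; exact: leq_trans (size_scale_leq _ _) sP.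
have HT : forall l, (l <= N)%N -> AZ (a' j ^+ (2 * k)) T.[(R.+1 + l)%:R].
  move=> l _; rewrite /T hornerM hornerZ hornerXn -HPR; last exact: leq_trans (leqnSn R) (leq_addr _ _).
  have := HF (extend_a a') (R.+1 + l)%N isT; rewrite extend_shift -/k.
  by rewrite mulrAC.
have := vander_int sT HT gb.
rewrite /T coefMXn ltnn subnn coefZ -HP0.
case=> z Hz; exists z.
by rewrite intrM -Hz mulrA.
Qed.
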